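(* Let $K\ge 2$, $T\ge 1$, and let $\mathbf{x}(t)\in[0,1]^K$, $t=1,\dots,T$, be any fixed sequence of reward vectors. Run the algorithm REX3 described in the context with transfer function $\psi$ equal to the identity and parameter $\gamma\in(0,\tfrac12)$. Provided that $\mathbb{E}\mathbb{G}_{alg}\le\mathbb{G}_{max}$ and $\mathbb{E}\mathbb{G}_{unif}\ge\mathbb{G}_{min}$, $$\mathbb{G}_{max}-\mathbb{E}\mathbb{G}_{alg}\le\frac{K\ln K}{\gamma}+\gamma\big(e\,\mathbb{G}_{max}-(4-e)\,\mathbb{G}_{min}\big).$$
   Context: Adversarial utility-based dueling bandit setting: there are $K$ arms; before play, an (oblivious) environment fixes a horizon $T$ and reward vectors $\mathbf{x}(t)=(x_1(t),\dots,x_K(t))\in[0,1]^K$ for $t=1,\dots,T$. At each round the learner selects a pair of arms $(a_t,b_t)$ and observes only the relative feedback $\psi(x_{a_t}(t)-x_{b_t}(t))$, here with $\psi(z)=z$. Algorithm REX3 with parameter $\gamma$: initialize $w_i(1)=1$ for all $i$. At each round $t$: set $p_i(t)=(1-\gamma)\frac{w_i(t)}{\sum_{j=1}^K w_j(t)}+\frac{\gamma}{K}$; draw two arms $a_t,b_t$ independently according to $\mathbf{p}(t)=(p_1(t),\dots,p_K(t))$; receive $\psi(x_{a_t}(t)-x_{b_t}(t))$; if $a_t\neq b_t$, set $w_{a_t}(t+1)=w_{a_t}(t)\exp\!\big(\frac{\gamma}{K}\frac{\psi(x_{a_t}-x_{b_t})}{2p_{a_t}(t)}\big)$ and $w_{b_t}(t+1)=w_{b_t}(t)\exp\!\big(-\frac{\gamma}{K}\frac{\psi(x_{a_t}-x_{b_t})}{2p_{b_t}(t)}\big)$;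 other weights unchanged. Notation: $\mathbb{G}_{max}=\max_i\sum_{t=1}^T x_i(t)$; $\mathbb{G}_{min}=\min_i\sum_{t=1}^T x_i(t)$; $\mathbb{G}_{alg}=\frac12\sum_{t=1}^T\big(x_{a_t}(t)+x_{b_t}(t)\big)$; $\mathbb{E}\mathbb{G}_{unif}=\frac1K\sum_{t=1}^T\sum_{i=1}^K x_i(t)$. Expectations are over the algorithm's internal randomization. *)

(* Defs.v *)
From mathcomp Require Import all_boot all_order all_algebra.
From mathcomp Require Import all_classical all_reals all_analysis.
Set Implicit Arguments. Unset Strict Implicit. Unset Printing Implicit Defensive.
Import Order.TTheory GRing.Theory Num.Theory.
Local Open Scope ring_scope.

Section REX3.
Variables (R : realType) (K : nat) (gamma : R) (psi : R -> R)
  (x : nat -> 'I_K -> R).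
(* Rounds are indexed t = 0, ..., T-1 (round t+1 of the paper). *)

Definition rex3_prob (w : 'I_K -> R) (i : 'I_K) : R :=
  (1 - gamma) * (w i / \sum_(j < K) w j) + gamma / K%:R.

Definition rex3_update (t : nat) (w : 'I_K -> R) (a b : 'I_K) : 'I_K -> R :=
  if a == b then w else
  fun i =>
    if i == a then
      w a * expR (gamma / K%:R * (psi (x t a - x t b) / (2 * rex3_prob w a)))
    else if i == b then
      w b * expR (- (gamma / K%:R * (psi (x t a - x t b) / (2 * rex3_prob w b))))
    else w i.

(* Expected gain (over the algorithm's randomization) of the remaining n
   rounds starting at round t with current weights w; a_t, b_t are drawn
   independently according to p(t). *)
Fixpoint rex3_expgain (n t : nat) (w : 'I_K -> R) : R :=
  match n with
  | 0 => 0
  | n'.+1 =>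
    \sum_(a < K) \sum_(b < K)
      rex3_prob w a * rex3_prob w b *
      ((x t a + x t b) / 2 + rex3_expgain n' t.+1 (rex3_update t w a b))
  end.

End REX3.

Definition EGalg (R : realType) (K T : nat) (gamma : R) (psi : R -> R)
  (x : nat -> 'I_K -> R) : R :=
  rex3_expgain gamma psi x T 0 (fun _ => 1).

Definition Gain (R : realType) (K T : nat) (x : nat -> 'I_K -> R) (i : 'I_K) : R :=
  \sum_(t < T) x t i.

(* max_i G_i; default 0 is harmless since all G_i >= 0 and K >= 1 *)
Definition Gmax (R : realType) (K T : nat) (x : nat -> 'I_K -> R) : R :=
  \big[Num.max/0]_(i < K) Gain T x i.

(* min_i G_i; default T is harmless since all G_i <= T and K >= 1 *)
Definition Gmin (R : realType) (K T : nat) (x : nat -> 'I_K -> R) : R :=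
  \big[Num.min/(T%:R : R)]_(i < K) Gain T x i.

Definition EGunif (R : realType) (K T : nat) (x : nat -> 'I_K -> R) : R :=
  K%:R^-1 * \sum_(t < T) \sum_(i < K) x t i.

(* Main.v *)
Require Import Defs.
From mathcomp Require Import all_boot all_order all_algebra.
From mathcomp Require Import all_classical all_reals all_analysis.
From mathcomp Require Import ring lra.
Import Order.TTheory GRing.Theory Num.Theory.
Local Open Scope ring_scope.

Section ExpB.
Local Open Scope classical_set_scope.
Variable R : realType.

Lemma exp_partial_le (y : R) n : 0 <= y -> series (exp_coeff y) n <= expR y.
Proof.
move=> y0; apply: nondecreasing_cvgn_le; last exact: is_cvg_series_exp_coeff.
move=> m k mk; rewrite -(subnKC mk); elim: (k - m)%N => [|d IH]; first by rewrite addn0.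
rewrite addnS seriesSr; apply: (le_trans IH); rewrite lerDl /exp_coeff /=.
by rewrite divr_ge0 // exprn_ge0.
Qed.

Lemma e_ge : 5 / 2 <= expR (1:R).
Proof.
have := exp_partial_le (1:R) 3 ler01.
rewrite !seriesSr /series /= big_geq // /exp_coeff /= !expr1n.
rewrite /factorial /=. lra.
Qed.

Lemma expR_le_neg (z : R) : z <= 0 -> expR z <= 1 + z + z ^+ 2 / 2.
Proof.
move=> z0; set y := - z.
have y0 : 0 <= y by rewrite /y oppr_ge0.
have hs := exp_partial_le y 4 y0.
rewrite !seriesSr /series /= big_geq // /exp_coeff /= /factorial /= in hs.
have -> : z = - y by rewrite /y opprK.
rewrite expRN.
have ey := expR_gt0 y.
have hq : 1 <= (1 + - y + (- y) ^+ 2 / 2) * expR y.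
  have q0 : 0 <= 1 + - y + (- y) ^+ 2 / 2 by rewrite sqrrN; nra.
  have h2 := ler_wpM2l q0 hs.
  apply: le_trans h2.
  rewrite sqrrN. rewrite !exprS !expr0 !mulr1.
  have y3 : 0 <= y * y * y by rewrite !mulr_ge0.
  have y4 : 0 <= y * y * y * y by rewrite !mulr_ge0.
  have y5 : 0 <= y * y * y * y * y by rewrite !mulr_ge0.
  nra.
rewrite -[X in X <= _]mul1r.
apply: le_trans (ler_wpM2r _ hq) _; first by rewrite invr_ge0 ltW.
by rewrite -mulrA mulfV ?mulr1 // gt_eqF.
Qed.

Lemma expR_le_pos (z : R) : 0 <= z <= 1 -> expR z <= 1 + z + (expR 1 - 2) * z ^+ 2.
Proof.
case/andP=> z0 z1.
pose a := series (exp_coeff z); pose b := series (exp_coeff (1:R)).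
have H : (fun k => a k - z ^+ 2 * b k) @ \oo --> expR z - z ^+ 2 * expR 1.
  apply: cvgB; first exact: is_cvg_series_exp_coeff.
  apply: cvgMr; exact: is_cvg_series_exp_coeff.
have key : forall d, a (d + 2)%N - z ^+ 2 * b (d + 2)%N <= 1 + z - 2 * z ^+ 2.
  elim=> [|d IH].
    rewrite /a /b add0n !seriesSr /series /= !big_geq // /exp_coeff /= /factorial /=.
    rewrite !expr1n. rewrite !expr0 !expr1. nra.
  rewrite addSn /a /b !seriesSr -/(a _) -/(b _).
  rewrite /exp_coeff /= expr1n.
  have hz : z ^+ (d + 2) <= z ^+ 2.
    by rewrite addnC exprD ler_piMr ?exprn_ge0 // exprn_ile1.
  have hf : 0 < ((d + 2)`!%:R : R) by rewrite ltr0n fact_gt0.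
  have : z ^+ (d + 2) / (d + 2)`!%:R <= z ^+ 2 * (1 / (d + 2)`!%:R).
    by rewrite mul1r ler_wpM2r // invr_ge0 ltW.
  lra.
rewrite -subr_ge0.
have : expR z - z ^+ 2 * expR 1 <= 1 + z - 2 * z ^+ 2.
  apply: (cvgr_to_le H); near=> k.
  have hk : (2 <= k)%N by near: k; exists 2%N.
  by rewrite -(subnK hk); apply: key.
lra.
Unshelve. all: by end_near.
Qed.

Lemma expR_quad (z : R) : z <= 1 -> expR z <= 1 + z + (expR 1 - 2) * z ^+ 2.
Proof.
move=> z1; have [z0|z0] := leP 0 z; first by apply: expR_le_pos; rewrite z0 z1.
have h := expR_le_neg z (ltW z0).
have h2 := e_ge; have h1 : 0 <= z ^+ 2 by rewrite sqr_ge0.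
have : z ^+ 2 / 2 <= (expR 1 - 2) * z ^+ 2 by nra.
lra.
Qed.
End ExpB.


Section ExSec.
Variables (R : realType) (K : nat).

Definition Ex (P : 'I_K -> R) (F : 'I_K -> 'I_K -> R) :=
  \sum_a \sum_b P a * P b * F a b.

Lemma sum_ind (F : 'I_K -> R) i : \sum_a (a == i)%:R * F a = F i.
Proof.
rewrite (bigD1 i) //= eqxx mul1r big1 ?addr0 // => a /negbTE ->.
by rewrite mul0r.
Qed.

Lemma ExD P F G : Ex P (fun a b => F a b + G a b) = Ex P F + Ex P G.
Proof.
rewrite /Ex -big_split /=; apply: eq_bigr => a _.
rewrite -big_split /=; apply: eq_bigr => b _; by rewrite mulrDr.
Qed.

Lemma ExZ P k F : Ex P (fun a b => k * F a b) = k * Ex P F.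
Proof.
rewrite /Ex mulr_sumr; apply: eq_bigr => a _.
rewrite mulr_sumr; apply: eq_bigr => b _; lra.
Qed.

Lemma Ex_const P k : \sum_i P i = 1 -> Ex P (fun _ _ => k) = k.
Proof.
move=> hP; rewrite /Ex.
transitivity (\sum_a P a * k).
  apply: eq_bigr => a _.
  by rewrite -mulr_suml -mulr_sumr hP mulr1.
by rewrite -mulr_suml hP mul1r.
Qed.

Lemma Ex_le P F G : (forall i, 0 <= P i) -> (forall a b, F a b <= G a b) ->
  Ex P F <= Ex P G.
Proof.
move=> hP hFG; rewrite /Ex; apply: ler_sum => a _; apply: ler_sum => b _.
by apply: ler_wpM2l; [rewrite mulr_ge0 | ].
Qed.

Lemma ExL P i G : Ex P (fun a b => (a == i)%:R * G b) = P i * \sum_b P b * G b.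
Proof.
rewrite /Ex -[RHS](sum_ind (fun a => P a * \sum_b P b * G b) i).
apply: eq_bigr => a _; rewrite !mulr_sumr; apply: eq_bigr => b _; lra.
Qed.

Lemma ExR P i G : Ex P (fun a b => (b == i)%:R * G a) = P i * \sum_a P a * G a.
Proof.
rewrite /Ex exchange_big /= -[RHS](sum_ind (fun b => P b * \sum_a P a * G a) i).
apply: eq_bigr => b _; rewrite !mulr_sumr; apply: eq_bigr => a _; lra.
Qed.

Definition chat (P y : 'I_K -> R) (a b i : 'I_K) : R :=
  if a == b then 0 else if i == a then (y a - y b) / (2 * P a)
  else if i == b then - ((y a - y b) / (2 * P b)) else 0.

Definition gg (P y : 'I_K -> R) i z := (y i - y z) / (2 * P i).

Lemma chatE P y a b i :
  chat P y a b i = (a == i)%:R * gg P y i b + (b == i)%:R * gg P y i a.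
Proof.
rewrite /chat /gg; case: (eqVneq a b) => [->|ab].
  case: (eqVneq b i) => [->|bi]; rewrite ?mul0r ?mul1r ?addr0 ?subrr ?mul0r ?addr0 //.
case: (eqVneq i a) => [->|ia].
  by rewrite subrr mul0r mulr0 addr0 mul1r.
rewrite mul0r add0r.
case: (eqVneq i b) => [->|ib].
  rewrite mul1r; rewrite -mulNr; congr (_ / _); ring.
by rewrite mul0r.
Qed.

Lemma chat2E P y a b i :
  chat P y a b i ^+ 2 = (a == i)%:R * gg P y i b ^+ 2 + (b == i)%:R * gg P y i a ^+ 2.
Proof.
have g0 : gg P y i i = 0 by rewrite /gg subrr mul0r.
rewrite chatE; case: (eqVneq a i) => [->|ai]; case: (eqVneq b i) => [->|bi];
  rewrite ?g0 ?mul1r ?mul0r ?addr0 ?add0r //.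
all: by rewrite expr2 ?mul0r ?addr0.
Qed.

Lemma E1 P y i : \sum_k P k = 1 -> P i != 0 ->
  Ex P (fun a b => chat P y a b i) = y i - \sum_b P b * y b.
Proof.
move=> hP Pi.
rewrite (_ : (fun a b => _) = fun a b => (a == i)%:R * gg P y i b + (b == i)%:R * gg P y i a);
  last by apply/funext => a; apply/funext => b; rewrite chatE.
rewrite ExD ExL ExR.
have -> : \sum_b P b * gg P y i b = (\sum_b P b * (y i - y b)) / (2 * P i).
  by rewrite mulr_suml; apply: eq_bigr => b _; rewrite /gg mulrA.
have -> : \sum_b P b * (y i - y b) = y i - \sum_b P b * y b.
  rewrite (eq_bigr (fun b => P b * y i - P b * y b)) => [|b _]; last by rewrite mulrBr.
  by rewrite sumrB -mulr_suml hP mul1r.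
by field.
Qed.

Lemma E2 P y i : \sum_k P k = 1 -> 0 < P i -> (forall k, 0 <= P k) ->
  (forall k, 0 <= y k <= 1) ->
  P i * Ex P (fun a b => chat P y a b i ^+ 2) <= (y i + \sum_b P b * y b) / 2.
Proof.
move=> hP Pi Pge hy.
rewrite (_ : (fun a b => _) = fun a b => (a == i)%:R * gg P y i b ^+ 2 + (b == i)%:R * gg P y i a ^+ 2);
  last by apply/funext => a; apply/funext => b; rewrite chat2E.
rewrite ExD ExL ExR.
have -> : P i * (P i * \sum_b P b * gg P y i b ^+ 2 + P i * \sum_b P b * gg P y i b ^+ 2)
   = \sum_b P b * ((y i - y b) ^+ 2 / 2).
  rewrite -mulrDr -big_split /= mulrA mulr_sumr; apply: eq_bigr => b _.
  rewrite /gg; field; by rewrite gt_eqF.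
have -> : (y i + \sum_b P b * y b) / 2 = \sum_b P b * ((y i + y b) / 2).
  rewrite [RHS](eq_bigr (fun b => P b * y i / 2 + P b * y b / 2)) => [|b _]; last by field.
  by rewrite big_split /= -!big_distrl /= hP mul1r; field.
apply: ler_sum => b _.
have := hy i; have := hy b; have := Pge b; move=> h1 /andP[h2 h3] /andP[h4 h5].
have : (y i - y b) ^+ 2 <= y i + y b by nra.
nra.
Qed.
End ExSec.
Arguments Ex {R K} P F.
Arguments chat {R K} P y a b i.
Arguments gg {R K} P y i z.



Section OneStep.
Variables (R : realType) (K : nat) (gamma : R) (j : 'I_K).
Hypotheses (hK : (2 <= K)%N) (hg0 : 0 < gamma) (hg1 : gamma < 1 / 2).

Definition Psi (w : 'I_K -> R) := ln (\sum_i w i) - ln (w j).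

Local Notation c := (gamma / K%:R).
Local Notation P w := (rex3_prob gamma w).

Lemma Kpos : 0 < K%:R :> R.
Proof. by rewrite ltr0n; apply: leq_trans hK. Qed.

Lemma c_gt0 : 0 < c.
Proof. by rewrite divr_gt0 // Kpos. Qed.

Lemma W_gt0 (w : 'I_K -> R) : (forall i, 0 < w i) -> 0 < \sum_i w i.
Proof.
move=> hw; have k0 : (0 < K)%N by apply: leq_trans hK.
rewrite (bigD1 (Ordinal k0)) //=; apply: ltr_pwDl; first exact: hw.
by apply: sumr_ge0 => i _; apply: ltW.
Qed.

Lemma P_ge (w : 'I_K -> R) i : (forall i, 0 < w i) -> c <= P w i.
Proof.
move=> hw; rewrite /rex3_prob lerDr; apply: mulr_ge0; first by have := hg1; lra.
by apply: divr_ge0; [apply: ltW | apply: ltW; apply: W_gt0].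
Qed.

Lemma P_gt0 (w : 'I_K -> R) i : (forall i, 0 < w i) -> 0 < P w i.
Proof. by move=> hw; apply: (lt_le_trans c_gt0 (P_ge w i hw)). Qed.

Lemma sumP (w : 'I_K -> R) : (forall i, 0 < w i) -> \sum_i P w i = 1.
Proof.
move=> hw; rewrite /rex3_prob big_split /= -mulr_sumr -big_distrl /=.
rewrite sumr_const card_ord mulfV ?gt_eqF ?W_gt0 // mulr1.
rewrite -[gamma / _ *+ K]mulr_natr mulfVK; first ring.
by rewrite gt_eqF // Kpos.
Qed.

Lemma Ex_sum (Q : 'I_K -> R) (F : 'I_K -> 'I_K -> 'I_K -> R) :
  Ex Q (fun a b => \sum_i F i a b) = \sum_i Ex Q (F i).
Proof.
rewrite /Ex; transitivity (\sum_a \sum_i \sum_b Q a * Q b * F i a b).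
  apply: eq_bigr => a _.
  rewrite (eq_bigr (fun b => \sum_i Q a * Q b * F i a b)); last by move=> b _; rewrite mulr_sumr.
  exact: exchange_big.
exact: exchange_big.
Qed.

Lemma upd_chat (y : nat -> 'I_K -> R) t (w : 'I_K -> R) a b :
  rex3_update gamma id y t w a b = fun i => w i * expR (c * chat (P w) (y t) a b i).
Proof.
apply/funext => i; rewrite /rex3_update /chat.
have [eab|ab] := eqVneq a b.
  by subst b; rewrite mulr0 expR0 mulr1.
have [eia|ia] := eqVneq i a; first by subst i.
have [eib|ib] := eqVneq i b; first by subst i; rewrite mulrN.
by rewrite mulr0 expR0 mulr1.
Qed.


Lemma stepA (w y : 'I_K -> R) (ch : 'I_K -> R) :
  (forall i, 0 < w i) -> (forall i, c * ch i <= 1) ->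
  Psi (fun i => w i * expR (c * ch i)) <=
  Psi w + \sum_i (w i / \sum_k w k) * (c * ch i + (expR 1 - 2) * (c * ch i) ^+ 2)
  - c * ch j.
Proof.
move=> hw hc; rewrite /Psi.
set W := \sum_k w k; set W' := \sum_i w i * expR (c * ch i).
set Y := \sum_i _.
have Wp : 0 < W by apply: W_gt0.
have W'p : 0 < W' by apply: (W_gt0 (fun i => w i * expR (c * ch i))) => i; rewrite mulr_gt0 ?expR_gt0.
have hln : ln (w j * expR (c * ch j)) = ln (w j) + c * ch j.
  by rewrite lnM ?expRK // posrE ?expR_gt0.
have hY : W' <= W * (1 + Y).
  rewrite /W' /Y mulrDr mulr1 mulr_sumr -big_split; apply: ler_sum => i _ /=.
  rewrite mulrA (mulrC W) mulfVK ?gt_eqF //.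
  rewrite -[X in _ <= X + _]mulr1 -mulrDr; apply: ler_wpM2l; first exact: ltW.
  by rewrite addrA; apply: expR_quad.
have hq : W' / W <= 1 + Y.
  have Wi : 0 <= W^-1 by rewrite invr_ge0 ltW.
  have := ler_wpM2r Wi hY.
  by rewrite mulrAC mulfV ?gt_eqF // mul1r.
have hlog : ln W' - ln W <= Y.
  rewrite -ln_div ?posrE //.
  have h1 : -1 < W' / W - 1 by have := divr_gt0 W'p Wp; lra.
  have := le_ln1Dx h1; rewrite (_ : 1 + (W' / W - 1) = W' / W); last by ring.
  lra.
rewrite hln; lra.
Qed.


Lemma ch_le1 (w y : 'I_K -> R) a b i : (forall i, 0 < w i) -> (forall i, 0 <= y i <= 1) ->
  c * chat (P w) y a b i <= 1.
Proof.
move=> hw hy; have hc := c_gt0.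
have hya := hy a; have hyb := hy b.
have key : forall k d, -1 <= d <= 1 -> c * (d / (2 * P w k)) <= 1.
  move=> k d /andP[d1 d2]; have hp := P_ge w k hw.
  have hp0 : 0 < P w k by apply: P_gt0.
  rewrite mulrA ler_pdivrMr ?mulr_gt0 // mul1r.
  nra.
rewrite /chat; case: (a == b); first by rewrite mulr0 ler01.
case: (i == a); first by apply: key; move: hya hyb => /andP[? ?] /andP[? ?]; apply/andP; split; lra.
case: (i == b); last by rewrite mulr0 ler01.
rewrite -mulNr; apply: key.
move: hya hyb => /andP[? ?] /andP[? ?]; apply/andP; split; lra.
Qed.

Lemma Ex_ge0 (Q : 'I_K -> R) F : (forall i, 0 <= Q i) -> (forall a b, 0 <= F a b) -> 0 <= Ex Q F.
Proof.
move=> hQ hF; apply: sumr_ge0 => a _; apply: sumr_ge0 => b _.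
by rewrite !mulr_ge0.
Qed.

Lemma one_step (w y : 'I_K -> R) : (forall i, 0 < w i) -> (forall i, 0 <= y i <= 1) ->
  Ex (P w) (fun a b => Psi (fun i => w i * expR (c * chat (P w) y a b i)))
  <= Psi w - c * (y j + gamma / (1 - gamma) * (2 - expR 1 / 2) * (K%:R^-1 * \sum_i y i))
     + c * (1 + gamma / (1 - gamma) * expR 1 / 2) * \sum_b P w b * y b.
Proof.
move=> hw hy.
set Q := P w; set W := \sum_k w k; set m := \sum_b Q b * y b; set S := \sum_i y i.
have Wp : 0 < W by apply: W_gt0.
have hQ0 : forall i, 0 <= Q i by move=> i; apply: ltW; apply: P_gt0.
have sQ : \sum_i Q i = 1 by apply: sumP.
have hc := c_gt0.
have he := e_ge R.
pose q i := w i / W.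
pose ch a b i := chat Q y a b i.
pose Y a b := \sum_i q i * (c * ch a b i + (expR 1 - 2) * (c * ch a b i) ^+ 2).
have H1 : Ex Q (fun a b => Psi (fun i => w i * expR (c * ch a b i)))
    <= Psi w + Ex Q Y - c * (y j - m).
  have H1a : Ex Q (fun a b => Psi (fun i => w i * expR (c * ch a b i))) <=
      Ex Q (fun a b => Psi w + Y a b - c * chat Q y a b j).
    apply: Ex_le => // a b; apply: stepA => // i; exact: ch_le1.
  apply: (le_trans H1a).
  rewrite (@ExD R K Q (fun a b => Psi w + Y a b)) (@ExD R K Q) (@Ex_const R K Q (Psi w) sQ).
  rewrite (_ : (fun a b => - (c * chat Q y a b j)) = (fun a b => (- c) * chat Q y a b j)); last first.
    by apply/funext=> a; apply/funext=> b; rewrite mulNr.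
  rewrite ExZ (@E1 R K Q y j sQ) ?gt_eqF ?P_gt0 //; by rewrite -/m mulNr.
have hq0 : forall i, 0 <= q i by move=> i; rewrite divr_ge0 // ltW.
have H2 : Ex Q Y <= c * (\sum_i q i * y i - m) + (expR 1 - 2) * c ^+ 2 / (1 - gamma) * ((S + K%:R * m) / 2).
  rewrite /Y Ex_sum.
  have -> : \sum_i q i * y i - m = \sum_i q i * (y i - m).
    rewrite [RHS](eq_bigr (fun i => q i * y i - q i * m)) => [|i _]; last by rewrite mulrBr.
    rewrite sumrB -big_distrl /= (_ : \sum_i q i = 1) ?mul1r //.
    by rewrite /q -big_distrl /= mulfV // gt_eqF.
  have -> : (S + K%:R * m) / 2 = \sum_i (y i + m) / 2.
    rewrite -big_distrl /= big_split /= sumr_const card_ord /S; congr (_ / _).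
    by rewrite mulr_natl.
  rewrite mulr_sumr mulr_sumr -big_split /=; apply: ler_sum => i _.
  rewrite (_ : Ex Q (fun a b => q i * (c * ch a b i + (expR 1 - 2) * (c * ch a b i) ^+ 2)) =
     q i * (c * Ex Q (fun a b => ch a b i) + (expR 1 - 2) * c ^+ 2 * Ex Q (fun a b => ch a b i ^+ 2))); last first.
    rewrite -!ExZ -ExD -ExZ; congr Ex; apply/funext=> a; apply/funext=> b; ring.
  rewrite /ch E1 ?gt_eqF ?P_gt0 // -/m.
  have hE2 := @E2 R K Q y i sQ (P_gt0 w i hw) hQ0 hy.
  have hEx0 : 0 <= Ex Q (fun a b => chat Q y a b i ^+ 2) by apply: Ex_ge0 => // a b; exact: sqr_ge0.
  have hQi : Q i = (1 - gamma) * q i + c by [].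
  have hk : 0 <= (expR 1 - 2) * c ^+ 2 by apply: mulr_ge0; [lra | exact: sqr_ge0].
  have hg : 0 < 1 - gamma by have := hg1; lra.
  set E := Ex Q _ in hE2 hEx0 *.
  have : q i * E <= Q i * E / (1 - gamma).
    rewrite ler_pdivlMr // hQi; nra.
  move=> hqE.
  have : (expR 1 - 2) * c ^+ 2 * (q i * E) <= (expR 1 - 2) * c ^+ 2 * (Q i * E / (1 - gamma)).
    by apply: ler_wpM2l.
  have : (expR 1 - 2) * c ^+ 2 * (Q i * E / (1 - gamma)) <= (expR 1 - 2) * c ^+ 2 / (1 - gamma) * ((y i + m) / 2).
    rewrite (_ : (expR 1 - 2) * c ^+ 2 * (Q i * E / (1 - gamma)) =
       (expR 1 - 2) * c ^+ 2 / (1 - gamma) * (Q i * E)); last by ring.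
    apply: ler_wpM2l => //; apply: divr_ge0 => //; exact: ltW.
  move=> h1 h2; rewrite -/m; nra.
have H3 : (1 - gamma) * \sum_i q i * y i + c * S = m.
  rewrite /m /Q /rex3_prob mulr_sumr /S mulr_sumr -big_split; apply: eq_bigr => i _ /=.
  rewrite /q; ring.
have Kne : K%:R != 0 :> R by rewrite gt_eqF // Kpos.
have gne : 1 - gamma != 0 by rewrite gt_eqF //; have := hg1; lra.
set A := \sum_i q i * y i in H2 H3.
have hA : A = (m - c * S) / (1 - gamma).
  by rewrite -H3 addrK mulrC mulKf.
have eqn : c * (A - m) + (expR 1 - 2) * c ^+ 2 / (1 - gamma) * ((S + K%:R * m) / 2) - c * (y j - m)
  = - c * (y j + gamma / (1 - gamma) * (2 - expR 1 / 2) * (K%:R^-1 * S))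
     + c * (1 + gamma / (1 - gamma) * expR 1 / 2) * m.
  by rewrite hA; clear -Kne gne; field; rewrite gne Kne.
have H4 : Psi w + Ex Q Y - c * (y j - m) <=
  Psi w + (c * (A - m) + (expR 1 - 2) * c ^+ 2 / (1 - gamma) * ((S + K%:R * m) / 2) -
    c * (y j - m)) by rewrite addrA lerD2r lerD2l.
rewrite eqn in H4.
apply: (le_trans H1); apply: (le_trans H4).
by rewrite mulNr addrA.
Qed.

End OneStep.


Section Main.
Variables (R : realType) (K T : nat) (gamma : R) (x : nat -> 'I_K -> R) (j : 'I_K).
Hypotheses (hK : (2 <= K)%N) (hg0 : 0 < gamma) (hg1 : gamma < 1 / 2)
  (hx : forall t i, (t < T)%N -> 0 <= x t i <= 1).

Local Notation c := (gamma / K%:R).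
Local Notation P w := (rex3_prob gamma w).
Local Notation ell s := (x s j + gamma / (1 - gamma) * (2 - expR 1 / 2) * (K%:R^-1 * \sum_i x s i)).
Local Notation Ps w := (@Psi R K j w).
Local Notation kap := (1 + gamma / (1 - gamma) * expR 1 / 2).

Lemma Ex_avg (Q y : 'I_K -> R) : \sum_i Q i = 1 ->
  Ex Q (fun a b => (y a + y b) / 2) = \sum_b Q b * y b.
Proof.
move=> hQ.
rewrite (_ : (fun a b => (y a + y b) / 2) = fun a b => 2^-1 * y a + 2^-1 * y b); last first.
  by apply/funext => a; apply/funext => b; rewrite mulrDl !(mulrC _ 2^-1).
rewrite ExD.
rewrite /Ex.
have -> : \sum_a \sum_b Q a * Q b * (2^-1 * y a) = 2^-1 * \sum_a Q a * y a.
  rewrite mulr_sumr; apply: eq_bigr => a _.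
  rewrite (eq_bigr (fun b => (Q a * (2^-1 * y a)) * Q b)); last by move=> b _; ring.
  by rewrite -mulr_sumr hQ mulr1; ring.
have -> : \sum_a \sum_b Q a * Q b * (2^-1 * y b) = 2^-1 * \sum_b Q b * y b.
  rewrite (eq_bigr (fun a => Q a * (2^-1 * \sum_b Q b * y b))); last first.
    move=> a _; rewrite !mulr_sumr; apply: eq_bigr => b _; ring.
  by rewrite -mulr_suml hQ mul1r.
by field.
Qed.

Lemma Psi_ge0 (w : 'I_K -> R) : (forall i, 0 < w i) -> 0 <= Ps w.
Proof.
move=> hw; rewrite /Psi subr_ge0 ler_ln ?posrE ?(@W_gt0 R K hK w hw) //.
rewrite (bigD1 j) //= lerDl; apply: sumr_ge0 => i _; exact: ltW.
Qed.

Lemma ind n : forall t (w : 'I_K -> R), (t + n <= T)%N -> (forall i, 0 < w i) ->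
  \sum_(s < n) ell (t + s) - kap * rex3_expgain gamma id x n t w <= Ps w / c.
Proof.
have hc := @c_gt0 R K gamma hK hg0.
elim: n => [|n IH] t w htn hw.
  rewrite big_ord0 /= mulr0 subr0; apply: divr_ge0; [exact: Psi_ge0 | exact: ltW].
have htT : (t < T)%N by apply: leq_trans htn; rewrite addnS ltnS leq_addr.
have hy : forall i, 0 <= x t i <= 1 by move=> i; apply: hx.
have sQ := @sumP R K gamma hK w hw.
have hQ0 : forall i, 0 <= P w i by move=> i; apply: ltW; apply: (@P_gt0 R K gamma hK).
have eE : rex3_expgain gamma id x n.+1 t w =
  Ex (P w) (fun a b => (x t a + x t b) / 2 + rex3_expgain gamma id x n t.+1 (rex3_update gamma id x t w a b)) by [].
rewrite eE big_ord_recl /= addn0.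
have -> : \sum_(i < n) ell (t + bump 0 i) = \sum_(i < n) ell (t.+1 + i).
  by apply: eq_bigr => i _; rewrite /bump /= add1n addnS addSn.
set L' := \sum_(i < n) ell (t.+1 + i).
rewrite ExD Ex_avg //.
set E' := Ex _ _.
have IHs : L' - kap * E' <= Ex (P w) (fun a b => Ps (rex3_update gamma id x t w a b)) / c.
  have : Ex (P w) (fun a b => L' - kap * rex3_expgain gamma id x n t.+1 (rex3_update gamma id x t w a b))
       <= Ex (P w) (fun a b => c^-1 * Ps (rex3_update gamma id x t w a b)).
    apply: Ex_le => // a b; rewrite [leRHS]mulrC; apply: IH; first by rewrite addSnnS.
    by move=> i; rewrite upd_chat mulr_gt0 ?expR_gt0.
  move=> H.
  have e1 : Ex (P w) (fun a b => L' - kap * rex3_expgain gamma id x n t.+1 (rex3_update gamma id x t w a b))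
     = L' - kap * E'.
    rewrite (_ : (fun a b => L' - kap * rex3_expgain gamma id x n t.+1 (rex3_update gamma id x t w a b)) =
       fun a b => L' + (- kap) * rex3_expgain gamma id x n t.+1 (rex3_update gamma id x t w a b)); last first.
      by apply/funext => a; apply/funext => b; rewrite mulNr.
    by rewrite ExD ExZ Ex_const // mulNr.
  by rewrite e1 ExZ [c^-1 * _]mulrC in H.
have OS := @one_step R K gamma j hK hg0 hg1 w (x t) hw hy.
rewrite -(_ : (fun a b => Ps (rex3_update gamma id x t w a b)) =
   fun a b => Ps (fun i => w i * expR (c * chat (P w) (x t) a b i))) in OS; last first.
  by apply/funext => a; apply/funext => b; rewrite upd_chat.
have OSc : Ex (P w) (fun a b => Ps (rex3_update gamma id x t w a b)) / c
    <= Ps w / c - ell t + kap * \sum_b P w b * x t b.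
  rewrite ler_pdivrMr //.
  rewrite (_ : (Ps w / c - ell t + kap * \sum_b P w b * x t b) * c =
     Ps w - c * ell t + c * kap * \sum_b P w b * x t b) //.
  have gne : 1 - gamma != 0 by rewrite gt_eqF //; have := hg1; lra.
  have Kne : K%:R != 0 :> R by rewrite gt_eqF // (@Kpos R K hK).
  by field; rewrite gne Kne gt_eqF.
have := le_trans IHs OSc.
set m := \sum_b _; lra.
Qed.

End Main.


Lemma e_le4 (R : realType) : expR (1 : R) <= 4.
Proof.
have h : 1 / 2 <= expR (- (1 / 2) : R).
  have := expR_ge1Dx (- (1 / 2) : R); lra.
have e12 : expR (1 / 2 : R) <= 2.
  rewrite -[expR (1/2)]invrK -expRN; rewrite -[X in _ <= X]invrK.
  rewrite lef_pV2 ?posrE ?invr_gt0 ?expR_gt0 //; last by lra.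
have -> : (1 : R) = 1 / 2 + 1 / 2 by field.
rewrite expRD.
have := expR_gt0 (1 / 2 : R).
nra.
Qed.

Theorem corollary1 (R : realType) (K T : nat) (x : nat -> 'I_K -> R)
  (gamma : R) :
  (2 <= K)%N -> (1 <= T)%N ->
  (forall t i, (t < T)%N -> 0 <= x t i <= 1) ->
  0 < gamma < 1 / 2 ->
  EGalg T gamma id x <= Gmax T x ->
  EGunif T x >= Gmin T x ->
  Gmax T x - EGalg T gamma id x <=
    K%:R * ln (K%:R) / gamma
    + gamma * (expR 1 * Gmax T x - (4 - expR 1) * Gmin T x).
Proof.
move=> hK _ hx /andP[g0 g1] hA hU.
have Kp := @Kpos R K hK.
have gne : 1 - gamma != 0 by rewrite gt_eqF //; lra.
have Kne : K%:R != 0 :> R by rewrite gt_eqF.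
have g0ne : gamma != 0 by rewrite gt_eqF.
have he1 := e_ge R; have he2 := e_le4 R.
have hG0 : forall i, 0 <= Gain T x i.
  move=> i; apply: sumr_ge0 => t _; have := hx t i (ltn_ord t); case/andP=> //.
set A := EGalg T gamma id x; set U := EGunif T x; set M := Gmax T x; set m0 := Gmin T x.
have key : forall j, Gain T x j - A <= K%:R * ln K%:R / gamma
    + gamma / (1 - gamma) / 2 * (expR 1 * A - (4 - expR 1) * U).
  move=> j.
  have := @ind R K T gamma x j hK g0 g1 hx T 0 (fun _ => 1) (leqnn _) (fun _ => ltr01).
  rewrite /Psi sumr_const card_ord ln1 subr0 -/A.
  rewrite big_split /= -mulr_sumr -mulr_sumr.
  rewrite (_ : \sum_(i < T) x (0 + i)%N j = Gain T x j) //.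
  rewrite (_ : K%:R^-1 * \sum_(i < T) \sum_i0 x (0 + i)%N i0 = U) //.
  have eq1 : ln (1 *+ K) / (gamma / K%:R) = K%:R * ln K%:R / gamma :> R.
    by clear -Kne g0ne gne; field; rewrite ?Kne ?g0ne ?gne.
  rewrite eq1.
  move=> H.
  have eq2 : gamma / (1 - gamma) / 2 * (expR 1 * A - (4 - expR 1) * U) =
    gamma / (1 - gamma) * expR 1 / 2 * A - gamma / (1 - gamma) * (2 - expR 1 / 2) * U.
    by clear -Kne g0ne gne; field; rewrite ?Kne ?g0ne ?gne.
  rewrite eq2; change (rex3_expgain gamma id x T 0 (fun=> 1)) with A in H; lra.
have k0 : (0 < K)%N by apply: leq_trans hK.
have [i0 _ hi0] := Order.TotalTheory.eq_bigmax (Ordinal k0) xpredT (fun i => Gain T x i) isT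
  (fun i _ => hG0 i).
have hM : M = Gain T x i0 by exact: hi0.
have hmin : m0 <= Gain T x i0 by exact: bigmin_le.
have hmin0 : 0 <= m0 by apply: le_bigmin => //; exact: ler0n.
have hDp : 0 <= expR 1 * M - (4 - expR 1) * m0.
  rewrite hM; nra.
have hD : expR 1 * A - (4 - expR 1) * U <= expR 1 * M - (4 - expR 1) * m0.
  have : expR 1 * A <= expR 1 * M by apply: ler_wpM2l => //; lra.
  have : (4 - expR 1) * m0 <= (4 - expR 1) * U by apply: ler_wpM2l => //; lra.
  lra.
have al0 : 0 <= gamma / (1 - gamma) / 2.
  by apply: divr_ge0 => //; apply: divr_ge0; lra.
have al1 : gamma / (1 - gamma) / 2 <= gamma.
  have g1' : 0 < 1 - gamma by lra.
  rewrite ler_pdivrMr // ler_pdivrMr //; nra.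
have h1 := ler_wpM2l al0 hD.
have h2 := ler_wpM2r hDp al1.
have := key i0; rewrite -hM.
lra.
Qed.
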